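(* Along a $C^1$ curve $z(s)$ with tangent $v^\mu=dz^\mu/ds$ in a Lorentzian manifold, let $p^\mu(s)$, antisymmetric $S^{\mu\nu}(s)$, a timelike unit vector $u^\mu(s)$ ($u_\mu u^\mu=-1$) and a scalar $M(s)>0$ be differentiable and satisfy $p^\mu=Mu^\mu$, $u_\mu S^{\mu\nu}=0$, and $u^\kappa v_\kappa\neq0$. Define the force and torque by $$F^\nu=\frac{\delta p^\nu}{\delta s}-\tfrac12 S^{\kappa\lambda}v^\mu R_{\kappa\lambda\mu}{}^{\nu},\qquad L^{\kappa\lambda}=\frac{\delta S^{\kappa\lambda}}{\delta s}-2p^{[\kappa}v^{\lambda]}.$$ Then $$\frac{dM}{ds}=(u^\kappa v_\kappa)^{-1}\Big[F^\mu v_\mu+u_\nu\frac{\delta u_\mu}{\delta s}L^{\mu\nu}\Big].$$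
   Context: $\delta/\delta s=v^\mu\nabla_\mu$ is the covariant derivative along the curve; $R_{\kappa\lambda\mu\nu}$ is the Riemann tensor, antisymmetric in its last two indices (and in its first two); $A^{[\kappa}B^{\lambda]}=\tfrac12(A^\kappa B^\lambda-A^\lambda B^\kappa)$. *)

(* Defs.v *)
From Stdlib Require Import Reals Lra.
Open Scope R_scope.

(* Points of a coordinate chart: nat -> R (coordinates 0..n-1 used). *)
Definition point := nat -> R.

Fixpoint sumI (n : nat) (f : nat -> R) : R :=
  match n with O => 0 | S k => sumI k f + f k end.

Definition eta (a b : nat) : R :=
  if Nat.eqb a b then (if Nat.eqb a 0 then -1 else 1) else 0.
Definition kron (a b : nat) : R := if Nat.eqb a b then 1 else 0.

(* A symmetric bilinear form G (components G mu nu, mu,nu < n) has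
   Lorentzian signature (-,+,...,+): there is an invertible change of basis
   E (columns e_a = E ^ a) with G(e_a,e_b) = eta_ab. *)
Definition lorentzian (n : nat) (G : nat -> nat -> R) : Prop :=
  (forall mu nu, (mu < n)%nat -> (nu < n)%nat -> G mu nu = G nu mu) /\
  exists E Einv : nat -> nat -> R,
    (forall a b, (a < n)%nat -> (b < n)%nat ->
       sumI n (fun mu => sumI n (fun nu => E mu a * E nu b * G mu nu)) = eta a b) /\
    (forall a b, (a < n)%nat -> (b < n)%nat ->
       sumI n (fun mu => Einv a mu * E mu b) = kron a b).

Definition lower (n : nat) (G : nat -> nat -> R) (X : nat -> R) (mu : nat) : R :=
  sumI n (fun nu => G mu nu * X nu).
Definition dot (n : nat) (G : nat -> nat -> R) (X Y : nat -> R) : R :=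
  sumI n (fun mu => lower n G X mu * Y mu).

(* Covariant derivative along the curve (tangent v, connection Gam,
   Gam x l a b = Gamma^l_{ab}(x)) of a vector field V^mu(s) whose ordinary
   derivative is dV:  dV^mu + Gamma^mu_{ab} v^a V^b. *)
Definition covD_vec (n : nat) (Gam : point -> nat -> nat -> nat -> R)
  (x : point) (v V dV : nat -> R) (mu : nat) : R :=
  dV mu + sumI n (fun a => sumI n (fun b => Gam x mu a b * v a * V b)).

Definition covD_2 (n : nat) (Gam : point -> nat -> nat -> nat -> R)
  (x : point) (v : nat -> R) (T dT : nat -> nat -> R) (k l : nat) : R :=
  dT k l
  + sumI n (fun a => sumI n (fun b => Gam x k a b * v a * T b l))
  + sumI n (fun a => sumI n (fun b => Gam x l a b * v a * T k b)).

(* Main.v *)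
Require Import Defs.
From Stdlib Require Import Reals Lra Lia FunctionalExtensionality.
Open Scope R_scope.

Lemma sumI_ext n f h : (forall i, (i<n)%nat -> f i = h i) -> sumI n f = sumI n h.
Proof. induction n; simpl; intros H; auto. rewrite IHn by (intros; apply H; lia). rewrite H by lia. reflexivity. Qed.
Lemma sumI_plus n f h : sumI n (fun i => f i + h i) = sumI n f + sumI n h.
Proof. induction n; simpl; [ring|rewrite IHn; ring]. Qed.
Lemma sumI_scal n c f : sumI n (fun i => c * f i) = c * sumI n f.
Proof. induction n; simpl; [ring|rewrite IHn; ring]. Qed.
Lemma sumI_scal_r n c f : sumI n (fun i => f i * c) = sumI n f * c.
Proof. induction n; simpl; [ring|rewrite IHn; ring]. Qed.
Lemma sumI_opp n f : sumI n (fun i => - f i) = - sumI n f.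
Proof. induction n; simpl; [ring|rewrite IHn; ring]. Qed.
Lemma sumI_minus n f h : sumI n (fun i => f i - h i) = sumI n f - sumI n h.
Proof. induction n; simpl; [ring|rewrite IHn; ring]. Qed.
Lemma sumI_0 n f : (forall i, (i<n)%nat -> f i = 0) -> sumI n f = 0.
Proof. intros H. transitivity (sumI n (fun _ => 0)). apply sumI_ext; auto.
 clear H; induction n; simpl; [ring|rewrite IHn; ring]. Qed.
Lemma sumI_swap n m f : sumI n (fun i => sumI m (fun j => f i j)) = sumI m (fun j => sumI n (fun i => f i j)).
Proof. induction n; simpl. symmetry; apply sumI_0; auto.
 rewrite IHn. rewrite <- sumI_plus. reflexivity. Qed.
Lemma sumI_mul n m f h : sumI n f * sumI m h = sumI n (fun i => sumI m (fun j => f i * h j)).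
Proof. rewrite <- sumI_scal_r. apply sumI_ext; intros. rewrite <- sumI_scal. reflexivity. Qed.
Lemma sumI_antisym n f : (forall i j, (i<n)%nat -> (j<n)%nat -> f i j = - f j i) ->
  sumI n (fun i => sumI n (fun j => f i j)) = 0.
Proof. intros H.
 assert (E: sumI n (fun i => sumI n (fun j => f i j)) = - sumI n (fun i => sumI n (fun j => f j i))).
 { rewrite <- sumI_opp. apply sumI_ext; intros. rewrite <- sumI_opp. apply sumI_ext; intros. apply H; auto. }
 rewrite (sumI_swap n n (fun i j => f j i)) in E. simpl in E. lra. Qed.
Lemma sum3_13 n F : sumI n (fun i => sumI n (fun j => sumI n (fun k => F i j k)))
  = sumI n (fun k => sumI n (fun j => sumI n (fun i => F i j k))).
Proof.
 transitivity (sumI n (fun i => sumI n (fun k => sumI n (fun j => F i j k)))).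
 { apply sumI_ext; intros. apply sumI_swap. }
 rewrite sumI_swap. apply sumI_ext; intros. apply sumI_swap. Qed.
Lemma sum3_312 n F : sumI n (fun i => sumI n (fun j => sumI n (fun k => F i j k)))
  = sumI n (fun k => sumI n (fun i => sumI n (fun j => F i j k))).
Proof.
 transitivity (sumI n (fun i => sumI n (fun k => sumI n (fun j => F i j k)))).
 { apply sumI_ext; intros. apply sumI_swap. }
 apply sumI_swap. Qed.
Lemma sum4_14 n F : sumI n (fun i => sumI n (fun j => sumI n (fun k => sumI n (fun l => F i j k l))))
  = sumI n (fun l => sumI n (fun j => sumI n (fun k => sumI n (fun i => F i j k l)))).
Proof.
 rewrite (sum3_13 n (fun i j k => sumI n (fun l => F i j k l))).
 transitivity (sumI n (fun k => sumI n (fun j => sumI n (fun l => sumI n (fun i => F i j k l))))).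
 { apply sumI_ext; intros; apply sumI_ext; intros; apply sumI_swap. }
 apply (sum3_13 n (fun k j l => sumI n (fun i => F i j k l))). Qed.
Lemma sum4_24 n F : sumI n (fun i => sumI n (fun j => sumI n (fun k => sumI n (fun l => F i j k l))))
  = sumI n (fun i => sumI n (fun l => sumI n (fun k => sumI n (fun j => F i j k l)))).
Proof. apply sumI_ext; intros. apply sum3_13. Qed.

Lemma dot_expand n G X Y : dot n G X Y = sumI n (fun mu => sumI n (fun nu => G mu nu * X nu * Y mu)).
Proof. unfold dot, lower. apply sumI_ext; intros. rewrite <- sumI_scal_r. reflexivity. Qed.
Lemma dot_ext n G X X' Y Y' : (forall i, (i<n)%nat -> X i = X' i) -> (forall i, (i<n)%nat -> Y i = Y' i) ->
  dot n G X Y = dot n G X' Y'.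
Proof. intros HX HY. rewrite !dot_expand. apply sumI_ext; intros; apply sumI_ext; intros.
 rewrite HX, HY; auto. Qed.
Lemma dot_plus_l n G X X' Y : dot n G (fun i => X i + X' i) Y = dot n G X Y + dot n G X' Y.
Proof. rewrite !dot_expand, <- sumI_plus. apply sumI_ext; intros. rewrite <- sumI_plus.
 apply sumI_ext; intros. ring. Qed.
Lemma dot_plus_r n G X Y Y' : dot n G X (fun i => Y i + Y' i) = dot n G X Y + dot n G X Y'.
Proof. rewrite !dot_expand, <- sumI_plus. apply sumI_ext; intros. rewrite <- sumI_plus.
 apply sumI_ext; intros. ring. Qed.
Lemma dot_scal_l n G c X Y : dot n G (fun i => c * X i) Y = c * dot n G X Y.
Proof. rewrite !dot_expand, <- sumI_scal. apply sumI_ext; intros. rewrite <- sumI_scal.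
 apply sumI_ext; intros. ring. Qed.
Lemma dot_scal_r n G c X Y : dot n G X (fun i => c * Y i) = c * dot n G X Y.
Proof. rewrite !dot_expand, <- sumI_scal. apply sumI_ext; intros. rewrite <- sumI_scal.
 apply sumI_ext; intros. ring. Qed.
Lemma dot_minus_l n G X X' Y : dot n G (fun i => X i - X' i) Y = dot n G X Y - dot n G X' Y.
Proof. rewrite !dot_expand, <- sumI_minus. apply sumI_ext; intros. rewrite <- sumI_minus.
 apply sumI_ext; intros. ring. Qed.
Lemma dot_sym n G X Y : (forall i j, (i<n)%nat -> (j<n)%nat -> G i j = G j i) ->
  dot n G X Y = dot n G Y X.
Proof. intros HG. rewrite !dot_expand, sumI_swap. apply sumI_ext; intros; apply sumI_ext; intros.
 rewrite HG by auto. ring. Qed.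
Lemma dot_sum_l n G f Y : dot n G (fun nu => sumI n (fun k => f k nu)) Y = sumI n (fun k => dot n G (f k) Y).
Proof. rewrite dot_expand.
 transitivity (sumI n (fun mu => sumI n (fun nu => sumI n (fun k => G mu nu * f k nu * Y mu)))).
 { apply sumI_ext; intros; apply sumI_ext; intros. rewrite <- sumI_scal, <- sumI_scal_r.
   apply sumI_ext; intros; ring. }
 rewrite (sum3_312 n (fun mu nu k => G mu nu * f k nu * Y mu)).
 apply sumI_ext; intros. rewrite dot_expand. reflexivity. Qed.

Definition Cf n (Gm : nat -> nat -> nat -> R) (V Y : nat -> R) (l : nat) :=
  sumI n (fun a => sumI n (fun b => Gm l a b * V a * Y b)).

Lemma compat n (G : nat -> nat -> R) Gm V X Y :
  dot n (fun mu nu => sumI n (fun a => V a * sumI n (fun l => Gm l a mu * G l nu + Gm l a nu * G mu l))) X Y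
  = dot n G X (Cf n Gm V Y) + dot n G (Cf n Gm V X) Y.
Proof.
 rewrite !dot_expand. unfold Cf.
 transitivity (sumI n (fun mu => sumI n (fun nu => sumI n (fun a => sumI n (fun l =>
     V a * Gm l a mu * G l nu * X nu * Y mu))))
   + sumI n (fun mu => sumI n (fun nu => sumI n (fun a => sumI n (fun l =>
     V a * Gm l a nu * G mu l * X nu * Y mu))))).
 { rewrite <- sumI_plus. apply sumI_ext; intros. rewrite <- sumI_plus. apply sumI_ext; intros.
   rewrite <- sumI_plus. rewrite <- sumI_scal_r, <- sumI_scal_r. apply sumI_ext; intros.
   rewrite <- sumI_scal, <- sumI_scal_r, <- sumI_scal_r, <- sumI_plus. apply sumI_ext; intros. ring. }
 f_equal.
 - rewrite sum4_14. apply sumI_ext; intros; apply sumI_ext; intros.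
   rewrite <- sumI_scal. apply sumI_ext; intros. rewrite <- sumI_scal. apply sumI_ext; intros. ring.
 - rewrite sum4_24. apply sumI_ext; intros; apply sumI_ext; intros.
   rewrite <- sumI_scal, <- sumI_scal_r. apply sumI_ext; intros.
   rewrite <- sumI_scal, <- sumI_scal_r. apply sumI_ext; intros. ring.
Qed.

Lemma deriv_sumI n (f : nat -> R -> R) d s :
  (forall i, (i<n)%nat -> derivable_pt_lim (f i) s (d i)) ->
  derivable_pt_lim (fun t => sumI n (fun i => f i t)) s (sumI n d).
Proof. induction n; intros H; simpl.
 - apply (derivable_pt_lim_const 0 s).
 - apply (derivable_pt_lim_plus (fun t => sumI n (fun i => f i t)) (f n)).
   apply IHn; intros; apply H; lia. apply H; lia. Qed.

Lemma deriv_dot n (G : R -> nat -> nat -> R) dG (X Y : R -> nat -> R) dX dY s :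
 (forall mu nu, (mu<n)%nat -> (nu<n)%nat -> derivable_pt_lim (fun t => G t mu nu) s (dG mu nu)) ->
 (forall mu, (mu<n)%nat -> derivable_pt_lim (fun t => X t mu) s (dX mu)) ->
 (forall mu, (mu<n)%nat -> derivable_pt_lim (fun t => Y t mu) s (dY mu)) ->
 derivable_pt_lim (fun t => dot n (G t) (X t) (Y t)) s
   (dot n dG (X s) (Y s) + dot n (G s) dX (Y s) + dot n (G s) (X s) dY).
Proof. intros HG HX HY.
 assert (H : derivable_pt_lim (fun t => dot n (G t) (X t) (Y t)) s
   (sumI n (fun mu => sumI n (fun nu => dG mu nu * X s nu + G s mu nu * dX nu) * Y s mu
      + lower n (G s) (X s) mu * dY mu))).
 { unfold dot. apply (deriv_sumI n (fun mu t => lower n (G t) (X t) mu * Y t mu)).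
   intros mu Hmu.
   apply (derivable_pt_lim_mult (fun t => lower n (G t) (X t) mu) (fun t => Y t mu)); auto.
   unfold lower. apply (deriv_sumI n (fun nu t => G t mu nu * X t nu)). intros nu Hnu.
   apply (derivable_pt_lim_mult (fun t => G t mu nu) (fun t => X t nu)); auto. }
 replace (dot n dG (X s) (Y s) + dot n (G s) dX (Y s) + dot n (G s) (X s) dY) with
   (sumI n (fun mu => sumI n (fun nu => dG mu nu * X s nu + G s mu nu * dX nu) * Y s mu
      + lower n (G s) (X s) mu * dY mu)); auto.
 unfold dot, lower. rewrite <- !sumI_plus. apply sumI_ext; intros. rewrite sumI_plus. ring.
Qed.

Lemma dot_sum3_l n G (f : nat->nat->nat->R) (h : nat->nat->nat->nat->R) Y :
  dot n G (fun nu => sumI n (fun k => sumI n (fun l => sumI n (fun m => f k l m * h k l m nu)))) Y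
  = sumI n (fun k => sumI n (fun l => sumI n (fun m => f k l m * dot n G (h k l m) Y))).
Proof.
 rewrite (dot_sum_l n G (fun k nu => sumI n (fun l => sumI n (fun m => f k l m * h k l m nu)))).
 apply sumI_ext; intros k _.
 rewrite (dot_sum_l n G (fun l nu => sumI n (fun m => f k l m * h k l m nu))).
 apply sumI_ext; intros l _.
 rewrite (dot_sum_l n G (fun m nu => f k l m * h k l m nu)).
 apply sumI_ext; intros m _. apply (dot_scal_l n G (f k l m) (h k l m)).
Qed.

Lemma uniq_const (f : R -> R) c s l : (forall t, f t = c) -> derivable_pt_lim f s l -> l = 0.
Proof. intros Hf D.
 assert (E : f = fun _ => c) by (apply functional_extensionality; auto).
 rewrite E in D. eapply uniqueness_limite. exact D. apply (derivable_pt_lim_const c s). Qed.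
Theorem mainTheorem8
  (n : nat)
  (g : point -> nat -> nat -> R)
  (Gam : point -> nat -> nat -> nat -> R)
  (Riem : point -> nat -> nat -> nat -> nat -> R)
  (z v : R -> nat -> R)
  (p dp u du : R -> nat -> R)
  (S dS : R -> nat -> nat -> R)
  (M dM : R -> R)
  (* Lorentzian metric *)
  (hg : forall x, lorentzian n (g x))
  (* torsion-free connection *)
  (hGsym : forall x l a b, (l < n)%nat -> (a < n)%nat -> (b < n)%nat ->
             Gam x l a b = Gam x l b a)
  (* metric compatibility along the curve: d/ds g_{mu nu}(z(s)) = v^a (Gamma^l_{a mu} g_{l nu} + Gamma^l_{a nu} g_{mu l}) *)
  (hGmet : forall s mu nu, (mu < n)%nat -> (nu < n)%nat ->
             derivable_pt_lim (fun t => g (z t) mu nu) s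
               (sumI n (fun a => v s a *
                  sumI n (fun l => Gam (z s) l a mu * g (z s) l nu
                                  + Gam (z s) l a nu * g (z s) mu l))))
  (* Riemann tensor: antisymmetric in its first two and in its last two indices *)
  (hR12 : forall x k l m nu, (k < n)%nat -> (l < n)%nat -> (m < n)%nat -> (nu < n)%nat ->
            Riem x k l m nu = - Riem x l k m nu)
  (hR34 : forall x k l m r, (k < n)%nat -> (l < n)%nat -> (m < n)%nat -> (r < n)%nat ->
            sumI n (fun nu => Riem x k l m nu * g x nu r)
            = - sumI n (fun nu => Riem x k l r nu * g x nu m))
  (* C^1 curve with tangent v *)
  (hz : forall s mu, derivable_pt_lim (fun t => z t mu) s (v s mu))
  (hvc : forall mu, continuity (fun s => v s mu))
  (* differentiability of p, S, u, M *)
  (hp' : forall s mu, derivable_pt_lim (fun t => p t mu) s (dp s mu))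
  (hS' : forall s k l, derivable_pt_lim (fun t => S t k l) s (dS s k l))
  (hu' : forall s mu, derivable_pt_lim (fun t => u t mu) s (du s mu))
  (hM' : forall s, derivable_pt_lim M s (dM s))
  (* hypotheses *)
  (hSanti : forall s k l, (k < n)%nat -> (l < n)%nat -> S s k l = - S s l k)
  (hunit : forall s, dot n (g (z s)) (u s) (u s) = -1)
  (hMpos : forall s, 0 < M s)
  (hpMu : forall s mu, (mu < n)%nat -> p s mu = M s * u s mu)
  (huS : forall s nu, (nu < n)%nat ->
           sumI n (fun mu => lower n (g (z s)) (u s) mu * S s mu nu) = 0)
  (huv : forall s, dot n (g (z s)) (u s) (v s) <> 0) :
  forall s : R,
    let x := z s in
    let Dp := covD_vec n Gam x (v s) (p s) (dp s) in
    let Du := covD_vec n Gam x (v s) (u s) (du s) in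
    let DS := covD_2 n Gam x (v s) (S s) (dS s) in
    (* F^nu = Dp^nu - 1/2 S^{kl} v^m R_{klm}^nu *)
    let F := fun nu => Dp nu - / 2 * sumI n (fun k => sumI n (fun l => sumI n (fun m =>
                 S s k l * v s m * Riem x k l m nu))) in
    (* L^{kl} = DS^{kl} - 2 p^[k v^l] = DS^{kl} - (p^k v^l - p^l v^k) *)
    let L := fun k l => DS k l - (p s k * v s l - p s l * v s k) in
    dM s = / dot n (g x) (u s) (v s) *
      (dot n (g x) F (v s)
       + sumI n (fun mu => sumI n (fun nu =>
           lower n (g x) (u s) nu * lower n (g x) Du mu * L mu nu))).
Proof.
  intros s x Dp Du DS F L.
  assert (Gsym : forall i j, (i<n)%nat -> (j<n)%nat -> g x i j = g x j i) by apply (proj1 (hg x)).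
  set (CU := Cf n (Gam x) (v s) (u s)).
  assert (HGm : forall mu nu, (mu<n)%nat -> (nu<n)%nat -> derivable_pt_lim (fun t => g (z t) mu nu) s
     ((fun mu nu => sumI n (fun a => v s a * sumI n (fun l => Gam x l a mu * g x l nu + Gam x l a nu * g x mu l))) mu nu))
    by (intros; apply hGmet; auto).
  assert (H_du : dot n (g x) Du (u s) = 0).
  { pose proof (deriv_dot n (fun t => g (z t)) _ u u (du s) (du s) s HGm
       (fun mu _ => hu' s mu) (fun mu _ => hu' s mu)) as D.
    apply (uniq_const _ (-1)) in D; [|intros; apply hunit].
    rewrite compat in D.
    assert (E1 : dot n (g x) Du (u s) = dot n (g x) (du s) (u s) + dot n (g x) CU (u s))
      by (unfold Du, covD_vec; apply dot_plus_l).
    assert (E2 : dot n (g x) (u s) Du = dot n (g x) (u s) (du s) + dot n (g x) (u s) CU)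
      by (unfold Du, covD_vec; apply dot_plus_r).
    assert (E3 : dot n (g x) (u s) Du = dot n (g x) Du (u s)) by (apply dot_sym; auto).
    change (dot n (g (z s)) (u s) (u s)) with (dot n (g x) (u s) (u s)) in D.
    unfold CU in E1, E2. change (g (z s)) with (g x) in D. lra. }
  assert (H_S : forall nu, (nu<n)%nat ->
     dot n (g x) (u s) (fun mu => DS mu nu) = - dot n (g x) Du (fun mu => S s mu nu)).
  { intros nu Hnu.
    pose proof (deriv_dot n (fun t => g (z t)) _ u (fun t mu => S t mu nu) (du s) (fun mu => dS s mu nu) s HGm
       (fun mu _ => hu' s mu) (fun mu _ => hS' s mu nu)) as D.
    apply (uniq_const _ 0) in D; [|intros; apply huS; auto].
    rewrite compat in D. change (g (z s)) with (g x) in D.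
    assert (E1 : dot n (g x) Du (fun mu => S s mu nu) = dot n (g x) (du s) (fun mu => S s mu nu)
        + dot n (g x) CU (fun mu => S s mu nu))
      by (unfold Du, covD_vec; apply dot_plus_l).
    assert (E2 : dot n (g x) (u s) (fun mu => DS mu nu) =
       dot n (g x) (u s) (fun mu => dS s mu nu) + dot n (g x) (u s) (Cf n (Gam x) (v s) (fun mu => S s mu nu))
       + dot n (g x) (u s) (fun mu => sumI n (fun a => sumI n (fun b => Gam x nu a b * v s a * S s mu b)))).
    { unfold DS, covD_2.
      rewrite (dot_plus_r n (g x) (u s) (fun mu => dS s mu nu + Cf n (Gam x) (v s) (fun mu => S s mu nu) mu)).
      rewrite dot_plus_r. reflexivity. }
    assert (E3 : dot n (g x) (u s) (fun mu => sumI n (fun a => sumI n (fun b => Gam x nu a b * v s a * S s mu b))) = 0).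
    { unfold dot.
      transitivity (sumI n (fun k => sumI n (fun a => sumI n (fun b =>
          lower n (g x) (u s) k * (Gam x nu a b * v s a * S s k b))))).
      { apply sumI_ext; intros. rewrite <- sumI_scal. apply sumI_ext; intros. rewrite <- sumI_scal. reflexivity. }
      rewrite sum3_13. apply sumI_0; intros b Hb. apply sumI_0; intros a Ha.
      transitivity ((Gam x nu a b * v s a) * sumI n (fun k => lower n (g x) (u s) k * S s k b)).
      { rewrite <- sumI_scal. apply sumI_ext; intros; ring. }
      pose proof (huS s b Hb) as Hb'. change (g (z s)) with (g x) in Hb'. rewrite Hb'. ring. }
    unfold CU in E1. lra. }
  assert (H_dSa : forall k l, (k<n)%nat -> (l<n)%nat -> dS s k l = - dS s l k).
  { intros k l Hk Hl. eapply uniqueness_limite. apply (hS' s k l).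
    assert (E : (fun t => S t k l) = (fun t => - S t l k))
      by (apply functional_extensionality; intros; apply hSanti; auto).
    rewrite E. apply (derivable_pt_lim_opp (fun t => S t l k)). apply hS'. }
  assert (H_DSa : forall k l, (k<n)%nat -> (l<n)%nat -> DS k l = - DS l k).
  { intros k l Hk Hl. unfold DS, covD_2. rewrite (H_dSa k l Hk Hl).
    assert (A1 : sumI n (fun a => sumI n (fun b => Gam x k a b * v s a * S s b l)) =
       - sumI n (fun a => sumI n (fun b => Gam x k a b * v s a * S s l b))).
    { rewrite <- sumI_opp. apply sumI_ext; intros. rewrite <- sumI_opp. apply sumI_ext; intros.
      rewrite (hSanti s i0 l) by auto. ring. }
    assert (A2 : sumI n (fun a => sumI n (fun b => Gam x l a b * v s a * S s k b)) =
       - sumI n (fun a => sumI n (fun b => Gam x l a b * v s a * S s b k))).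
    { rewrite <- sumI_opp. apply sumI_ext; intros. rewrite <- sumI_opp. apply sumI_ext; intros.
      rewrite (hSanti s k i0) by auto. ring. }
    lra. }
  assert (H_dp : forall mu, (mu<n)%nat -> Dp mu = dM s * u s mu + M s * Du mu).
  { intros mu Hmu.
    assert (E0 : dp s mu = dM s * u s mu + M s * du s mu).
    { eapply uniqueness_limite. apply (hp' s mu).
      assert (E : (fun t => p t mu) = (fun t => M t * u t mu))
        by (apply functional_extensionality; intros; apply hpMu; auto).
      rewrite E. apply (derivable_pt_lim_mult M (fun t => u t mu)). apply hM'. apply hu'. }
    assert (E1 : Cf n (Gam x) (v s) (p s) mu = M s * Cf n (Gam x) (v s) (u s) mu).
    { unfold Cf. rewrite <- sumI_scal. apply sumI_ext; intros. rewrite <- sumI_scal.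
      apply sumI_ext; intros. rewrite hpMu by auto. ring. }
    unfold Dp, Du, covD_vec. fold (Cf n (Gam x) (v s) (p s) mu). fold (Cf n (Gam x) (v s) (u s) mu).
    rewrite E0, E1. ring. }
  assert (H_R : dot n (g x) (fun nu => sumI n (fun k => sumI n (fun l => sumI n (fun m =>
                 S s k l * v s m * Riem x k l m nu)))) (v s) = 0).
  { rewrite (dot_sum3_l n (g x) (fun k l m => S s k l * v s m) (fun k l m nu => Riem x k l m nu)).
    apply sumI_0; intros k Hk. apply sumI_0; intros l Hl.
    transitivity (S s k l * sumI n (fun m => sumI n (fun r => v s m * v s r *
        sumI n (fun nu => Riem x k l m nu * g x nu r)))).
    { rewrite <- sumI_scal. apply sumI_ext; intros m Hm.
      rewrite dot_sym by auto. rewrite dot_expand. rewrite Rmult_assoc. f_equal.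
      rewrite (sumI_swap n n (fun mu nu => g x mu nu * v s nu * Riem x k l m mu)).
      rewrite <- sumI_scal. apply sumI_ext; intros r Hr.
      rewrite <- sumI_scal. rewrite <- sumI_scal. apply sumI_ext; intros nu Hnu.
      rewrite (Gsym nu r) by auto. ring. }
    rewrite sumI_antisym. ring.
    intros m r Hm Hr. rewrite hR34 by auto. ring. }
  set (A := dot n (g x) (u s) (v s)).
  assert (HA : A <> 0) by apply huv.
  assert (HF : dot n (g x) F (v s) = dM s * A + M s * dot n (g x) Du (v s)).
  { unfold F.
    rewrite (dot_minus_l n (g x) Dp (fun nu => / 2 * sumI n (fun k => sumI n (fun l => sumI n (fun m =>
                 S s k l * v s m * Riem x k l m nu))))).
    rewrite dot_scal_l, H_R.
    rewrite (dot_ext n (g x) Dp (fun mu => dM s * u s mu + M s * Du mu) (v s) (v s)); auto.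
    rewrite dot_plus_l, !dot_scal_l. unfold A. ring. }
  assert (HT : sumI n (fun mu => sumI n (fun nu =>
           lower n (g x) (u s) nu * lower n (g x) Du mu * L mu nu))
        = - M s * dot n (g x) Du (v s)).
  { transitivity (sumI n (fun mu => lower n (g x) Du mu * sumI n (fun nu => lower n (g x) (u s) nu * DS mu nu))
       - dot n (g x) Du (p s) * dot n (g x) (u s) (v s)
       + dot n (g x) Du (v s) * dot n (g x) (u s) (p s)).
    { unfold dot. rewrite !sumI_mul. rewrite <- sumI_minus, <- sumI_plus. apply sumI_ext; intros.
      rewrite <- sumI_scal, <- sumI_minus, <- sumI_plus. apply sumI_ext; intros. unfold L. ring. }
    assert (T1 : sumI n (fun mu => lower n (g x) Du mu * sumI n (fun nu => lower n (g x) (u s) nu * DS mu nu)) = 0).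
    { transitivity (sumI n (fun mu => sumI n (fun nu => lower n (g x) Du mu * lower n (g x) Du nu * S s nu mu))).
      { apply sumI_ext; intros mu Hmu.
        transitivity (lower n (g x) Du mu * (- dot n (g x) (u s) (fun nu => DS nu mu))).
        { f_equal. unfold dot. rewrite <- sumI_opp. apply sumI_ext; intros. rewrite H_DSa by auto. ring. }
        rewrite H_S by auto. rewrite Ropp_involutive. unfold dot. rewrite <- sumI_scal.
        apply sumI_ext; intros. ring. }
      apply sumI_antisym. intros i j Hi Hj. rewrite (hSanti s j i) by auto. ring. }
    assert (T2 : dot n (g x) Du (p s) = 0).
    { rewrite (dot_ext n (g x) Du Du (p s) (fun i => M s * u s i)); auto.
      rewrite dot_scal_r, H_du. ring. }
    assert (T3 : dot n (g x) (u s) (p s) = - M s).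
    { rewrite (dot_ext n (g x) (u s) (u s) (p s) (fun i => M s * u s i)); auto.
      rewrite dot_scal_r. pose proof (hunit s) as Hu. change (g (z s)) with (g x) in Hu. rewrite Hu. ring. }
    rewrite T1, T2, T3. ring. }
  rewrite HF, HT. field. exact HA.
Qed.
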